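(* Let $\gamma\ge1$ and fix $T>0$. Let $(h,u,v)\in C^1([0,T]\times\mathbb{R})$ with $h>0$ solve $$\partial_t h+h^2\partial_\xi u=0,\qquad \partial_t u+\partial_\xi\big(h^\gamma/\gamma\big)-v=0,\qquad \partial_t v+u=0,$$ with initial data $(h_0,u_0,v_0)$. Suppose $Z_0^\sharp$, $\omega_0^\sharp$, $\inf_\xi h_0$ and $\sup_\xi\{h_0,|u_0|,|v_0|\}$ are all finite and positive, and that $M_0:=\sup_{\xi\in\mathbb{R}}\{|R_1(0,\xi)|,|R_2(0,\xi)|,|R_3(0,\xi)|\}<\infty$. Then for every $t\in[0,T]$, $$\sup_{\xi\in\mathbb{R}}\{|R_1(t,\xi)|,|R_2(t,\xi)|,|R_3(t,\xi)|\}\le M_0e^t$$ and $$\sup_{\xi\in\mathbb{R}}h(t,\xi)\le \vartheta(M_0e^t)=\begin{cases}\big(\frac{\gamma-1}{2}M_0e^t+1\big)^{\frac{2}{\gamma-1}},&\gamma>1,\\ e^{M_0e^t},&\gamma=1.\end{cases}$$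
   Context: Riemann invariants: $\mathcal{K}(h)=\int_1^h s^{\frac{\gamma-3}{2}}\,ds$, $R_1=u-\mathcal{K}(h)$, $R_2=u+\mathcal{K}(h)$, $R_3=v$; $\vartheta=\mathcal{K}^{-1}$. Also $Z_j=\sqrt{h}\,\big[\partial_\xi u+(-1)^j h^{\frac{\gamma-3}{2}}\partial_\xi h\big]$ ($j=1,2$), $Z_0^\sharp=\sup_\xi\max_{i=1,2}Z_i(0,\xi)$, $\omega_0(\xi)=\frac{1}{h_0(\xi)}+v_0'(\xi)$, $\omega_0^\sharp=\sup_\xi\omega_0$. *)

(* Defs.v *)
From Stdlib Require Import Reals Lra.
From Coquelicot Require Import Coquelicot.
Open Scope R_scope.

Definition strip (T : R) (p : R * R) : Prop := 0 <= fst p <= T.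

Definition cont_on_strip (T : R) (f : R -> R -> R) : Prop :=
  forall t x, 0 <= t <= T ->
    filterlim (fun p : R * R => f (fst p) (snd p))
      (within (strip T) (locally (t, x))) (locally (f t x)).

Definition is_pderiv_t (T : R) (f ft : R -> R -> R) : Prop :=
  forall t x, 0 <= t <= T ->
    filterlim (fun s => (f s x - f t x) / (s - t))
      (within (fun s => 0 <= s <= T /\ s <> t) (locally t)) (locally (ft t x)).

Definition is_pderiv_x (T : R) (f fx : R -> R -> R) : Prop :=
  forall t x, 0 <= t <= T -> is_derive (fun y => f t y) x (fx t x).

Definition C1_strip (T : R) (f ft fx : R -> R -> R) : Prop :=
  is_pderiv_t T f ft /\ is_pderiv_x T f fx /\
  cont_on_strip T f /\ cont_on_strip T ft /\ cont_on_strip T fx.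

Definition supR (g : R -> R) : Rbar := Lub_Rbar (fun y => exists x, y = g x).
Definition infR (g : R -> R) : Rbar := Glb_Rbar (fun y => exists x, y = g x).

Definition Kfun (gamma h : R) : R :=
  RInt (fun s => Rpower s ((gamma - 3) / 2)) 1 h.

Definition RI1 (gamma : R) (h u : R -> R -> R) (t x : R) : R := u t x - Kfun gamma (h t x).
Definition RI2 (gamma : R) (h u : R -> R -> R) (t x : R) : R := u t x + Kfun gamma (h t x).
Definition RI3 (v : R -> R -> R) (t x : R) : R := v t x.

Definition Zj (gamma : R) (j : nat) (h hx ux : R -> R -> R) (t x : R) : R :=
  sqrt (h t x) * (ux t x + (-1) ^ j * Rpower (h t x) ((gamma - 3) / 2) * hx t x).

(* vartheta = K^{-1}, explicit formula as in the paper *)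
Definition vartheta (gamma y : R) : R :=
  if Rlt_dec 1 gamma then Rpower ((gamma - 1) / 2 * y + 1) (2 / (gamma - 1))
  else exp y.

(* Main.v *)
Require Import Defs.
From Stdlib Require Import Reals Lra Classical ClassicalEpsilon.
From Coquelicot Require Import Coquelicot.
Open Scope R_scope.

Definition Kexp (gamma h : R) : R :=
  if Rlt_dec 1 gamma then 2/(gamma-1) * (Rpower h ((gamma-1)/2) - 1) else ln h.

Lemma is_derive_Rpower x p : 0 < x -> is_derive (fun y => Rpower y p) x (p * Rpower x (p-1)).
Proof. intros; apply is_derive_Reals, derivable_pt_lim_power; auto. Qed.

Lemma Kexp_deriv gamma h : 1 <= gamma -> 0 < h ->
  is_derive (Kexp gamma) h (Rpower h ((gamma-3)/2)).
Proof.
  intros Hg Hh. unfold Kexp. destruct (Rlt_dec 1 gamma) as [g1|g1].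
  - replace (Rpower h ((gamma-3)/2)) with
      (2/(gamma-1) * ((gamma-1)/2 * Rpower h ((gamma-1)/2 - 1) - 0)).
    apply (is_derive_scal (fun x => Rpower x ((gamma-1)/2) - 1)).
    apply (is_derive_minus (fun x => Rpower x ((gamma-1)/2)) (fun _ => 1)).
    apply is_derive_Rpower; auto. apply (is_derive_const (K:=R_AbsRing) (V:=R_NormedModule)).
    replace ((gamma - 1) / 2 - 1) with ((gamma-3)/2) by field. field. lra.
  - assert (gamma = 1) by lra. subst.
    auto_derive. auto.
    replace ((1-3)/2) with (-(1)) by field. rewrite Rpower_Ropp, Rpower_1 by auto. field. lra.
Qed.

Lemma Kfun_eq gamma h : 1 <= gamma -> 0 < h -> Kfun gamma h = Kexp gamma h.
Proof.
  intros Hg Hh. unfold Kfun.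
  assert (Hpos : forall x, Rmin 1 h <= x <= Rmax 1 h -> 0 < x).
  { intros x Hx. assert (0 < Rmin 1 h) by (apply Rmin_pos; lra). lra. }
  rewrite (is_RInt_unique _ _ _ (Kexp gamma h - Kexp gamma 1)).
  - unfold Kexp. destruct (Rlt_dec 1 gamma). replace (Rpower 1 ((gamma-1)/2)) with 1. ring. unfold Rpower; rewrite ln_1, Rmult_0_r, exp_0; auto.
    rewrite ln_1. ring.
  - apply (is_RInt_derive (Kexp gamma)).
    + intros x Hx. apply Kexp_deriv; auto.
    + intros x Hx. apply (ex_derive_continuous (K:=R_AbsRing) (V:=R_NormedModule) (fun s => Rpower s ((gamma-3)/2))).
      eexists. apply is_derive_Rpower. auto.
Qed.

Lemma Kexp_lt gamma a b : 1 <= gamma -> 0 < a -> a < b -> Kexp gamma a < Kexp gamma b.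
Proof.
  intros Hg Ha Hab. unfold Kexp. destruct (Rlt_dec 1 gamma).
  - apply Rmult_lt_compat_l. apply Rdiv_lt_0_compat; lra.
    assert (Rpower a ((gamma-1)/2) < Rpower b ((gamma-1)/2)).
    apply Rlt_Rpower_l; lra. lra.
  - apply ln_increasing; auto.
Qed.

Lemma vartheta_spec gamma y : 1 <= gamma -> 0 <= y ->
  0 < vartheta gamma y /\ Kexp gamma (vartheta gamma y) = y.
Proof.
  intros Hg Hy. unfold vartheta, Kexp. destruct (Rlt_dec 1 gamma).
  - assert (Hb : 0 < (gamma-1)/2*y+1).
    { assert (0 <= (gamma-1)/2*y) by (apply Rmult_le_pos; lra). lra. }
    split. unfold Rpower. apply exp_pos.
    rewrite Rpower_mult. replace (2 / (gamma - 1) * ((gamma - 1) / 2)) with 1 by (field; lra).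
    rewrite Rpower_1 by auto. field. lra.
  - split. apply exp_pos. apply ln_exp.
Qed.

Lemma Kexp_le_vartheta gamma h y : 1 <= gamma -> 0 < h -> 0 <= y ->
  Kexp gamma h <= y -> h <= vartheta gamma y.
Proof.
  intros Hg Hh Hy Hk. destruct (vartheta_spec gamma y Hg Hy) as [H1 H2].
  destruct (Rle_or_lt h (vartheta gamma y)); auto.
  assert (Kexp gamma (vartheta gamma y) < Kexp gamma h) by (apply Kexp_lt; auto). lra.
Qed.

Definition Lim0 (Q : R -> R) (a : R) : Prop :=
  forall eps, 0 < eps -> exists d, 0 < d /\ forall e, 0 < e < d -> Rabs (Q e - a) < eps.

Lemma Lim0_ext Q1 Q2 a d0 : 0 < d0 -> (forall e, 0 < e < d0 -> Q1 e = Q2 e) ->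
  Lim0 Q1 a -> Lim0 Q2 a.
Proof.
  intros Hd0 HE HL eps Heps. destruct (HL eps Heps) as [d [Hd H]].
  exists (Rmin d d0). split. apply Rmin_pos; auto.
  intros e He. assert (e < d) by (eapply Rlt_le_trans; [apply He| apply Rmin_l]).
  assert (e < d0) by (eapply Rlt_le_trans; [apply He| apply Rmin_r]).
  rewrite <- HE by lra. apply H; lra.
Qed.

Lemma Lim0_plus Q1 Q2 a b : Lim0 Q1 a -> Lim0 Q2 b -> Lim0 (fun e => Q1 e + Q2 e) (a + b).
Proof.
  intros H1 H2 eps Heps. destruct (H1 (eps/2)) as [d1 [Hd1 K1]]. lra.
  destruct (H2 (eps/2)) as [d2 [Hd2 K2]]. lra.
  exists (Rmin d1 d2). split. apply Rmin_pos; auto.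
  intros e He. assert (e < d1) by (eapply Rlt_le_trans; [apply He| apply Rmin_l]).
  assert (e < d2) by (eapply Rlt_le_trans; [apply He| apply Rmin_r]).
  specialize (K1 e ltac:(lra)). specialize (K2 e ltac:(lra)).
  replace (Q1 e + Q2 e - (a + b)) with ((Q1 e - a) + (Q2 e - b)) by ring.
  eapply Rle_lt_trans. apply Rabs_triang. lra.
Qed.

Lemma Lim0_scal r Q a : Lim0 Q a -> Lim0 (fun e => r * Q e) (r * a).
Proof.
  intros H eps Heps. destruct (H (eps / (Rabs r + 1))) as [d [Hd K]].
  apply Rdiv_lt_0_compat; auto. pose proof (Rabs_pos r); lra.
  exists d. split; auto. intros e He. specialize (K e He).
  replace (r * Q e - r * a) with (r * (Q e - a)) by ring. rewrite Rabs_mult.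
  pose proof (Rabs_pos r). pose proof (Rabs_pos (Q e - a)).
  apply Rle_lt_trans with ((Rabs r + 1) * Rabs (Q e - a)). nra.
  apply Rmult_lt_reg_r with (/ (Rabs r + 1)). apply Rinv_0_lt_compat; lra.
  replace ((Rabs r + 1) * Rabs (Q e - a) * / (Rabs r + 1)) with (Rabs (Q e - a)) by (field; lra).
  apply K.
Qed.

Lemma Lim0_mult Q1 Q2 a b : Lim0 Q1 a -> Lim0 Q2 b -> Lim0 (fun e => Q1 e * Q2 e) (a * b).
Proof.
  intros H1 H2 eps Heps.
  set (m := eps / (2 * (Rabs a + Rabs b + 1))).
  assert (Hm : 0 < m). { unfold m. apply Rdiv_lt_0_compat; auto. pose proof (Rabs_pos a); pose proof (Rabs_pos b); lra. }
  destruct (H1 (Rmin m 1)) as [d1 [Hd1 K1]]. apply Rmin_pos; lra.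
  destruct (H2 (Rmin m 1)) as [d2 [Hd2 K2]]. apply Rmin_pos; lra.
  exists (Rmin d1 d2). split. apply Rmin_pos; auto.
  intros e He. assert (e < d1) by (eapply Rlt_le_trans; [apply He| apply Rmin_l]).
  assert (e < d2) by (eapply Rlt_le_trans; [apply He| apply Rmin_r]).
  specialize (K1 e ltac:(lra)). specialize (K2 e ltac:(lra)).
  assert (Hm1 : Rmin m 1 <= m) by apply Rmin_l. assert (Hm2 : Rmin m 1 <= 1) by apply Rmin_r.
  set (x := Q1 e - a) in *. set (y := Q2 e - b) in *.
  replace (Q1 e * Q2 e - a * b) with (x * y + a * y + x * b) by (unfold x, y; ring).
  assert (Rabs (x*y + a*y + x*b) <= Rabs x * Rabs y + Rabs a * Rabs y + Rabs x * Rabs b).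
  { rewrite <- !Rabs_mult. eapply Rle_trans. apply Rabs_triang.
    apply Rplus_le_compat_r. apply Rabs_triang. }
  assert (Hx : Rabs x < m) by lra. assert (Hy : Rabs y < m) by lra.
  assert (Hy1 : Rabs y < 1) by lra.
  pose proof (Rabs_pos a); pose proof (Rabs_pos b); pose proof (Rabs_pos x); pose proof (Rabs_pos y).
  assert (Rabs x * Rabs y + Rabs a * Rabs y + Rabs x * Rabs b <= m * (Rabs a + Rabs b + 1)) by nra.
  assert (m * (Rabs a + Rabs b + 1) = eps / 2) by (unfold m; field; lra).
  lra.
Qed.

Lemma Lim0_le P Q p q d : 0 < d -> Lim0 P p -> Lim0 Q q ->
  (forall e, 0 < e < d -> P e <= Q e) -> p <= q.
Proof.
  intros Hd HP HQ Hle. destruct (Rle_or_lt p q); auto.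
  destruct (HP ((p - q)/2)) as [d1 [Hd1 K1]]. lra.
  destruct (HQ ((p - q)/2)) as [d2 [Hd2 K2]]. lra.
  set (e := Rmin d (Rmin d1 d2) / 2).
  assert (0 < Rmin d (Rmin d1 d2)) by (repeat apply Rmin_pos; auto).
  assert (Rmin d (Rmin d1 d2) <= d) by apply Rmin_l.
  assert (Rmin d (Rmin d1 d2) <= d1) by (eapply Rle_trans; [apply Rmin_r|apply Rmin_l]).
  assert (Rmin d (Rmin d1 d2) <= d2) by (eapply Rle_trans; [apply Rmin_r|apply Rmin_r]).
  specialize (K1 e ltac:(unfold e; lra)). specialize (K2 e ltac:(unfold e; lra)).
  specialize (Hle e ltac:(unfold e; lra)).
  apply Rabs_def2 in K1. apply Rabs_def2 in K2. lra.
Qed.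

Lemma ball_R (x e y : R) : ball x e y <-> Rabs (y - x) < e.
Proof. reflexivity. Qed.

Lemma cont_eps T f s y : cont_on_strip T f -> 0 <= s <= T ->
  forall eps, 0 < eps -> exists d, 0 < d /\ forall s' y', 0 <= s' <= T ->
   Rabs (s' - s) < d -> Rabs (y' - y) < d -> Rabs (f s' y' - f s y) < eps.
Proof.
  intros Hc Hs eps Heps. pose proof (Hc s y Hs) as H.
  apply filterlim_locally with (eps := mkposreal eps Heps) in H.
  destruct H as [d Hd]. exists d. split. apply cond_pos.
  intros s' y' Hs' H1 H2. apply (Hd (s', y')). split; assumption. exact Hs'.
Qed.

Lemma pt_eps T f ft s y : is_pderiv_t T f ft -> 0 <= s <= T ->
  forall eps, 0 < eps -> exists d, 0 < d /\ forall s', 0 <= s' <= T -> s' <> s ->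
   Rabs (s' - s) < d -> Rabs ((f s' y - f s y) / (s' - s) - ft s y) < eps.
Proof.
  intros Hc Hs eps Heps. pose proof (Hc s y Hs) as H.
  apply filterlim_locally with (eps := mkposreal eps Heps) in H.
  destruct H as [d Hd]. exists d. split. apply cond_pos.
  intros s' Hs' H1 H2. apply (Hd s'). exact H2. split; assumption.
Qed.

Lemma dir_lim T f ft fx s y c : C1_strip T f ft fx -> 0 < s <= T ->
  Lim0 (fun e => (f s y - f (s-e) (y - c*e))/e) (ft s y + c * fx s y).
Proof.
  intros [Ht [Hx [Hc [Hct Hcx]]]] Hs eps Heps.
  destruct (pt_eps T f ft s y Ht ltac:(lra) (eps/2)) as [d1 [Hd1 K1]]. lra.
  assert (Hca : 0 < Rabs c + 1) by (pose proof (Rabs_pos c); lra).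
  destruct (cont_eps T fx s y Hcx ltac:(lra) (eps/2/(Rabs c + 1))) as [d2 [Hd2 K2]].
  apply Rdiv_lt_0_compat; lra.
  exists (Rmin (Rmin d1 s) (d2 / (Rabs c + 1))). split.
  repeat apply Rmin_pos; try lra. apply Rdiv_lt_0_compat; lra.
  intros e He.
  assert (e < d1 /\ e < s /\ e < d2 / (Rabs c + 1)) as [E1 [E2 E3]].
  { destruct He as [He0 He1].
    pose proof (Rmin_l (Rmin d1 s) (d2 / (Rabs c + 1))).
    pose proof (Rmin_r (Rmin d1 s) (d2 / (Rabs c + 1))).
    pose proof (Rmin_l d1 s). pose proof (Rmin_r d1 s). lra. }
  assert (Hse : 0 <= s - e <= T) by lra.
  specialize (K1 (s - e) Hse ltac:(lra) ltac:(rewrite Rabs_left by lra; lra)).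
  replace ((f (s - e) y - f s y) / (s - e - s)) with ((f s y - f (s-e) y)/e) in K1
    by (field; lra).
  destruct (MVT_gen (fun z => f (s-e) z) (y - c*e) y (fun z => fx (s-e) z)) as [z [Hz Hmvt]].
  { intros x _. apply Hx. exact Hse. }
  { intros x _. apply derivable_continuous_pt. exists (fx (s-e) x).
    apply is_derive_Reals. apply Hx. exact Hse. }
  simpl in Hmvt.
  assert (Hzy : Rabs (z - y) <= Rabs c * e).
  { unfold Rmin, Rmax in Hz. destruct (Rle_dec (y - c*e) y);
    destruct (Rle_or_lt 0 c); [rewrite (Rabs_right c) by lra | rewrite (Rabs_left c) by lra
      | rewrite (Rabs_right c) by lra | rewrite (Rabs_left c) by lra];
    apply Rabs_le; nra. }
  assert (Hzd : Rabs (z - y) < d2).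
  { apply Rle_lt_trans with (Rabs c * e); auto.
    apply Rle_lt_trans with ((Rabs c + 1) * e). pose proof (Rabs_pos c); nra.
    apply Rmult_lt_reg_r with (/ (Rabs c + 1)). apply Rinv_0_lt_compat; lra.
    replace ((Rabs c + 1) * e * / (Rabs c + 1)) with e by (field; lra). exact E3. }
  assert (E4 : e < d2).
  { apply Rlt_le_trans with (d2 / (Rabs c + 1)); auto.
    apply Rmult_le_reg_r with (Rabs c + 1). lra. unfold Rdiv. rewrite Rmult_assoc, Rinv_l by lra.
    pose proof (Rabs_pos c). nra. }
  specialize (K2 (s - e) z Hse ltac:(rewrite Rabs_left by lra; lra) Hzd).
  replace ((f s y - f (s - e) (y - c * e)) / e - (ft s y + c * fx s y)) with
    (((f s y - f (s-e) y)/e - ft s y) + c * (fx (s-e) z - fx s y)).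
  2:{ replace (f s y - f (s - e) (y - c * e)) with ((f s y - f (s-e) y) + (f (s-e) y - f (s-e) (y - c*e))) by ring.
      rewrite Hmvt. field. lra. }
  eapply Rle_lt_trans. apply Rabs_triang. rewrite Rabs_mult.
  assert (Rabs c * Rabs (fx (s - e) z - fx s y) <= (Rabs c + 1) * (eps / 2 / (Rabs c + 1))).
  { pose proof (Rabs_pos c). pose proof (Rabs_pos (fx (s - e) z - fx s y)).
    assert (0 < eps / 2 / (Rabs c + 1)) by (apply Rdiv_lt_0_compat; lra). nra. }
  replace ((Rabs c + 1) * (eps / 2 / (Rabs c + 1))) with (eps/2) in H by (field; lra).
  lra.
Qed.

Lemma path_close T h s y c : cont_on_strip T h -> 0 < s <= T ->
  forall eps, 0 < eps -> exists d, 0 < d /\ forall e, 0 < e < d ->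
    0 <= s - e <= T /\ Rabs (h (s-e) (y - c*e) - h s y) < eps.
Proof.
  intros Hc Hs eps Heps.
  destruct (cont_eps T h s y Hc ltac:(lra) eps Heps) as [d [Hd K]].
  assert (Hca : 0 < Rabs c + 1) by (pose proof (Rabs_pos c); lra).
  exists (Rmin s (d / (Rabs c + 1))). split. apply Rmin_pos. lra. apply Rdiv_lt_0_compat; lra.
  intros e He.
  assert (e < s /\ e < d / (Rabs c + 1)) as [E1 E2].
  { pose proof (Rmin_l s (d / (Rabs c + 1))). pose proof (Rmin_r s (d / (Rabs c + 1))). lra. }
  assert (E3 : (Rabs c + 1) * e < d).
  { apply Rmult_lt_reg_r with (/ (Rabs c + 1)). apply Rinv_0_lt_compat; lra.
    replace ((Rabs c + 1) * e * / (Rabs c + 1)) with e by (field; lra). exact E2. }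
  split. lra. apply K. lra.
  rewrite Rabs_left by lra. pose proof (Rabs_pos c). nra.
  replace (y - c * e - y) with (- (c * e)) by ring. rewrite Rabs_Ropp, Rabs_mult.
  rewrite (Rabs_right e) by lra. pose proof (Rabs_pos c). nra.
Qed.

Lemma dirK_lim gamma T h ht hx s y c : 1 <= gamma -> C1_strip T h ht hx ->
  (forall t x, 0 <= t <= T -> 0 < h t x) -> 0 < s <= T ->
  Lim0 (fun e => (Kexp gamma (h s y) - Kexp gamma (h (s-e) (y - c*e)))/e)
       (Rpower (h s y) ((gamma-3)/2) * (ht s y + c * hx s y)).
Proof.
  intros Hg HC Hpos Hs.
  set (h1 := h s y). set (k := Rpower h1 ((gamma-3)/2)).
  set (D := fun e => let h2 := h (s-e) (y - c*e) in
              if Req_EM_T h2 h1 then k else (Kexp gamma h1 - Kexp gamma h2)/(h1 - h2)).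
  assert (HD : Lim0 D k).
  { intros eps Heps.
    assert (Hk : derivable_pt_lim (Kexp gamma) h1 k).
    { apply is_derive_Reals. apply Kexp_deriv; auto. apply Hpos; lra. }
    destruct (Hk eps Heps) as [del Hdel].
    destruct HC as [_ [_ [Hc _]]].
    destruct (path_close T h s y c Hc Hs del (cond_pos del)) as [d [Hd K]].
    exists d. split; auto. intros e He. destruct (K e He) as [_ K2].
    unfold D. cbv zeta. destruct (Req_EM_T (h (s - e) (y - c * e)) h1).
    - unfold Rminus. rewrite Rplus_opp_r, Rabs_R0. auto.
    - specialize (Hdel (h (s - e) (y - c * e) - h1) ltac:(lra) K2).
      replace (h1 + (h (s - e) (y - c * e) - h1)) with (h (s - e) (y - c * e)) in Hdel by ring.
      replace ((Kexp gamma h1 - Kexp gamma (h (s - e) (y - c * e))) / (h1 - h (s - e) (y - c * e)))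
        with ((Kexp gamma (h (s - e) (y - c * e)) - Kexp gamma h1) / (h (s - e) (y - c * e) - h1)).
      exact Hdel. field. lra. }
  pose proof (Lim0_mult _ _ _ _ HD (dir_lim T h ht hx s y c HC Hs)) as HM.
  apply (Lim0_ext (fun e => D e * ((h s y - h (s-e) (y-c*e))/e)) _ _ 1 Rlt_0_1); [|exact HM].
  intros e He. unfold D. cbv zeta. fold h1.
  destruct (Req_EM_T (h (s - e) (y - c * e)) h1) as [E|E].
  - rewrite E. unfold Rminus. rewrite !Rplus_opp_r. field. lra.
  - field. split; lra.
Qed.

Lemma touch (W Phi : R -> R) w0 phi0 g p d : 0 < d ->
  (forall e, 0 < e < d -> Rabs (W e) < Phi e) -> Rabs w0 = phi0 ->
  Lim0 (fun e => (w0 - W e)/e) g -> Lim0 (fun e => (phi0 - Phi e)/e) p ->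
  p <= g \/ p <= - g.
Proof.
  intros Hd HW Hw0 Hg Hp.
  destruct (Rle_or_lt 0 w0).
  - left. rewrite Rabs_right in Hw0 by lra. subst phi0.
    apply (Lim0_le _ _ _ _ d Hd Hp Hg).
    intros e He. specialize (HW e He). apply Rabs_def2 in HW.
    unfold Rdiv. apply Rmult_le_compat_r. left; apply Rinv_0_lt_compat; lra. lra.
  - right. rewrite Rabs_left in Hw0 by lra. subst phi0.
    pose proof (Lim0_scal (-1) _ _ Hg) as Hg'.
    replace (-1 * g) with (-g) in Hg' by ring.
    apply (Lim0_le _ _ _ _ d Hd Hp Hg').
    intros e He. specialize (HW e He). apply Rabs_def2 in HW.
    replace (-1 * ((w0 - W e) / e)) with ((-w0 - -W e)/e) by (field; lra).
    unfold Rdiv. apply Rmult_le_compat_r. left; apply Rinv_0_lt_compat; lra. lra.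
Qed.

Definition G (a b c : R) : R := Rmax (Rabs (a - b)) (Rmax (Rabs (a + b)) (Rabs c)).

Lemma Rmax_lip a b c d : Rabs (Rmax a b - Rmax c d) <= Rabs (a - c) + Rabs (b - d).
Proof. unfold Rmax; repeat destruct Rle_dec; unfold Rabs; repeat destruct Rcase_abs; lra. Qed.

Lemma G_lip a b c a' b' c' :
  Rabs (G a b c - G a' b' c') <= 2 * Rabs (a - a') + 2 * Rabs (b - b') + Rabs (c - c').
Proof.
  unfold G. eapply Rle_trans. apply Rmax_lip.
  eapply Rle_trans. apply Rplus_le_compat_l. apply Rmax_lip.
  pose proof (Rabs_triang_inv2 (a - b) (a' - b')).
  pose proof (Rabs_triang_inv2 (a + b) (a' + b')).
  pose proof (Rabs_triang_inv2 c c').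
  pose proof (Rabs_triang (a - a') (-(b - b'))).
  pose proof (Rabs_triang (a - a') (b - b')).
  replace (a - b - (a' - b')) with ((a - a') + - (b - b')) in H by ring.
  replace (a + b - (a' + b')) with ((a - a') + (b - b')) in H0 by ring.
  rewrite Rabs_Ropp in H2. lra.
Qed.

Lemma G_nonneg a b c : 0 <= G a b c.
Proof. unfold G. eapply Rle_trans. apply Rabs_pos. apply Rmax_l. Qed.

Lemma G_bounds a b c : Rabs (a - b) <= G a b c /\ Rabs (a + b) <= G a b c /\ Rabs c <= G a b c /\
  (Rabs (a - b) = G a b c \/ Rabs (a + b) = G a b c \/ Rabs c = G a b c).
Proof.
  unfold G. unfold Rmax; repeat destruct Rle_dec; repeat split; try lra; auto.
Qed.

Lemma cont_R f x : continuity_pt f x -> forall eps, 0 < eps ->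
  exists d, 0 < d /\ forall z, Rabs (z - x) < d -> Rabs (f z - f x) < eps.
Proof.
  intros H eps Heps. destruct (H eps Heps) as [d [Hd K]].
  exists d. split; auto. intros z Hz.
  destruct (Req_dec z x). subst. unfold Rminus. rewrite Rplus_opp_r, Rabs_R0. auto.
  apply (K z). split. split. constructor. auto. exact Hz.
Qed.

Lemma Kh_cont gamma T h ht hx s y : 1 <= gamma -> C1_strip T h ht hx ->
  (forall t x, 0 <= t <= T -> 0 < h t x) -> 0 <= s <= T ->
  forall eps, 0 < eps -> exists d, 0 < d /\ forall s' y', 0 <= s' <= T ->
   Rabs (s' - s) < d -> Rabs (y' - y) < d ->
   Rabs (Kexp gamma (h s' y') - Kexp gamma (h s y)) < eps.
Proof.
  intros Hg [_ [_ [Hc _]]] Hpos Hs eps Heps.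
  assert (Hk : continuity_pt (Kexp gamma) (h s y)).
  { apply derivable_continuous_pt. eexists. apply is_derive_Reals. apply Kexp_deriv; auto. }
  destruct (cont_R _ _ Hk eps Heps) as [a [Ha Ka]].
  destruct (cont_eps T h s y Hc Hs a Ha) as [d [Hd Kd]].
  exists d. split. exact Hd. intros s' y' H1 H2 H3. apply Ka. apply Kd; auto.
Qed.

Lemma Derive_hgamma gamma T h ht hx s y : 1 <= gamma -> C1_strip T h ht hx ->
  (forall t x, 0 <= t <= T -> 0 < h t x) -> 0 <= s <= T ->
  Derive (fun z => Rpower (h s z) gamma / gamma) y = Rpower (h s y) (gamma - 1) * hx s y.
Proof.
  intros Hg [_ [Hx _]] Hpos Hs. apply is_derive_unique.
  assert (Hf : is_derive (fun z => Rpower z gamma / gamma) (h s y) (Rpower (h s y) (gamma - 1))).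
  { apply (is_derive_ext (fun z => / gamma * Rpower z gamma)). intros z; unfold Rdiv; apply Rmult_comm.
    replace (Rpower (h s y) (gamma - 1)) with (/ gamma * (gamma * Rpower (h s y) (gamma - 1))).
    apply (is_derive_scal (fun z => Rpower z gamma)). apply is_derive_Rpower. apply Hpos; auto.
    field. lra. }
  pose proof (is_derive_comp (fun z => Rpower z gamma / gamma) (fun z => h s z) y _ _ Hf (Hx s y Hs)) as HH.
  simpl in HH. replace (Rpower (h s y) (gamma - 1) * hx s y) with (scal (hx s y) (Rpower (h s y) (gamma - 1))).
  exact HH. unfold scal; simpl; unfold mult; simpl. ring.
Qed.

Lemma Rpower_id1 H gamma : 0 < H ->
  Rpower H ((gamma-3)/2) * H ^ 2 = Rpower H ((gamma+1)/2).
Proof.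
  intros HH. rewrite <- (Rpower_pow 2 H HH). rewrite <- Rpower_plus. f_equal. simpl. field.
Qed.

Lemma Rpower_id2 H gamma : 
  Rpower H ((gamma-3)/2) * Rpower H ((gamma+1)/2) = Rpower H (gamma - 1).
Proof. rewrite <- Rpower_plus. f_equal. field. Qed.

Lemma phi_lim M e s : Lim0 (fun z => (M * exp ((1+e)*s) - M * exp ((1+e)*(s - z)))/z)
   ((1+e) * (M * exp ((1+e)*s))).
Proof.
  assert (Hd : derivable_pt_lim (fun z => M * exp ((1+e)*z)) s ((1+e) * (M * exp ((1+e)*s)))).
  { apply is_derive_Reals. auto_derive. auto. ring. }
  intros eps Heps. destruct (Hd eps Heps) as [d Hdd]. exists d. split. apply cond_pos.
  intros z Hz. specialize (Hdd (-z) ltac:(lra) ltac:(rewrite Rabs_left by lra; lra)).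
  replace (s + - z) with (s - z) in Hdd by ring.
  replace ((M * exp ((1 + e) * s) - M * exp ((1 + e) * (s - z))) / z) with
   ((M * exp ((1 + e) * (s - z)) - M * exp ((1 + e) * s)) / - z) by (field; lra).
  exact Hdd.
Qed.

Lemma abs_b x : x <= Rabs x /\ - x <= Rabs x.
Proof. split. apply Rle_abs. rewrite <- Rabs_Ropp. apply Rle_abs. Qed.

Lemma core gamma T h u v ht hx ut ux vt vx M0 eps t x :
  1 <= gamma ->
  C1_strip T h ht hx -> C1_strip T u ut ux -> C1_strip T v vt vx ->
  (forall t x, 0 <= t <= T -> 0 < h t x) ->
  (forall t x, 0 <= t <= T -> ht t x + (h t x) ^ 2 * ux t x = 0) ->
  (forall t x, 0 <= t <= T ->
     ut t x + Derive (fun y => Rpower (h t y) gamma / gamma) x - v t x = 0) ->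
  (forall t x, 0 <= t <= T -> vt t x + u t x = 0) ->
  (forall y, G (u 0 y) (Kexp gamma (h 0 y)) (v 0 y) <= M0) ->
  0 < eps -> 0 <= t <= T ->
  G (u t x) (Kexp gamma (h t x)) (v t x) < (M0 + eps) * exp ((1+eps)*t).
Proof.
  intros Hg Ch Cu Cv Hpos P1 P2 P3 Hinit Heps Ht.
  set (Fv := fun s y => G (u s y) (Kexp gamma (h s y)) (v s y)).
  set (phi := fun s => (M0+eps) * exp((1+eps)*s)).
  change (Fv t x < phi t).
  assert (HM0 : 0 <= M0) by (eapply Rle_trans; [apply G_nonneg | apply (Hinit 0)]).
  assert (Hphipos : forall s, 0 < phi s).
  { intros s. unfold phi. apply Rmult_lt_0_compat. lra. apply exp_pos. }
  assert (Hphimono : forall a b, a <= b -> phi a <= phi b).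
  { intros a b Hab. unfold phi. apply Rmult_le_compat_l. lra.
    destruct (Req_dec a b). subst; lra. left. apply exp_increasing. nra. }
  set (L := Rpower (vartheta gamma (phi t)) ((gamma+1)/2)).
  assert (HL : 0 <= L) by (unfold L, Rpower; left; apply exp_pos).
  set (Good := fun s => forall s', 0 <= s' <= s -> forall y, Rabs (y - x) <= L * (t - s') ->
                 Fv s' y < phi s').
  assert (Good_mono : forall a b, a <= b -> Good b -> Good a).
  { intros a b Hab Gb s' Hs' y Hy. apply Gb; auto. lra. }
  assert (Good0 : Good 0).
  { intros s' Hs' y _. assert (s' = 0) by lra. subst s'.
    unfold phi. rewrite Rmult_0_r, exp_0, Rmult_1_r. specialize (Hinit y). unfold Fv. lra. }
  assert (Fv_cont : forall s y, 0 <= s <= T -> forall e, 0 < e -> exists d, 0 < d /\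
            forall s' y', 0 <= s' <= T -> Rabs (s' - s) < d -> Rabs (y' - y) < d ->
            Rabs (Fv s' y' - Fv s y) < e).
  { intros s y Hs e He.
    destruct Cu as [_ [_ [Cu' _]]]. destruct Cv as [_ [_ [Cv' _]]].
    destruct (cont_eps T u s y Cu' Hs (e/5)) as [d1 [Hd1 K1]]. lra.
    destruct (cont_eps T v s y Cv' Hs (e/5)) as [d2 [Hd2 K2]]. lra.
    destruct (Kh_cont gamma T h ht hx s y Hg Ch Hpos Hs (e/5)) as [d3 [Hd3 K3]]. lra.
    exists (Rmin d1 (Rmin d2 d3)). split. repeat apply Rmin_pos; auto.
    intros s' y' Hs' E1 E2.
    pose proof (Rmin_l d1 (Rmin d2 d3)). pose proof (Rmin_r d1 (Rmin d2 d3)).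
    pose proof (Rmin_l d2 d3). pose proof (Rmin_r d2 d3).
    specialize (K1 s' y' Hs' ltac:(lra) ltac:(lra)).
    specialize (K2 s' y' Hs' ltac:(lra) ltac:(lra)).
    specialize (K3 s' y' Hs' ltac:(lra) ltac:(lra)).
    unfold Fv. eapply Rle_lt_trans. apply G_lip. lra. }
  assert (phi_cont : forall s e, 0 < e -> exists d, 0 < d /\ forall z, Rabs (z - s) < d ->
            Rabs (phi z - phi s) < e).
  { intros s e He. apply cont_R; auto. apply derivable_continuous_pt.
    eexists. apply is_derive_Reals. unfold phi. auto_derive. auto. reflexivity. }
  set (E := fun s => 0 <= s <= t /\ Good s).
  destruct (completeness E) as [m [Hub Hlub]].
  { exists t. intros z [Hz _]. lra. }
  { exists 0. split. lra. exact Good0. }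
  assert (Hm0 : 0 <= m) by (apply Hub; split; [lra|exact Good0]).
  assert (Hmt : m <= t) by (apply Hlub; intros z [Hz _]; lra).
  assert (ClA : forall s', 0 <= s' < m -> Good s').
  { intros s' Hs'. destruct (classic (exists s'', E s'' /\ s' < s'')) as [[s'' [[_ G''] Hlt]]|N].
    - apply Good_mono with s''. lra. exact G''.
    - exfalso. assert (m <= s'). { apply Hlub. intros z Ez. destruct (Rle_or_lt z s'); auto.
        exfalso. apply N. exists z. split; auto. } lra. }
  assert (ClB1 : 0 < m -> forall y, Rabs (y - x) <= L * (t - m) -> Fv m y <= phi m).
  { intros Hm y Hy. destruct (Rle_or_lt (Fv m y) (phi m)) as [|Hgt]; auto. exfalso.
    set (gap := Fv m y - phi m).
    destruct (Fv_cont m y ltac:(lra) (gap/2)) as [d1 [Hd1 K1]]. unfold gap; lra.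
    destruct (phi_cont m (gap/2)) as [d2 [Hd2 K2]]. unfold gap; lra.
    set (s'' := m - Rmin (Rmin d1 d2) m / 2).
    assert (0 < Rmin (Rmin d1 d2) m) by (repeat apply Rmin_pos; auto).
    pose proof (Rmin_l (Rmin d1 d2) m). pose proof (Rmin_r (Rmin d1 d2) m).
    pose proof (Rmin_l d1 d2). pose proof (Rmin_r d1 d2).
    assert (Hs1 : 0 <= s'' < m) by (unfold s''; lra).
    assert (Hs2 : Rabs (s'' - m) < d1 /\ Rabs (s'' - m) < d2).
    { unfold s''. rewrite Rabs_left by lra. lra. }
    assert (HG := ClA s'' Hs1 s'' ltac:(lra) y).
    assert (Hyy : Rabs (y - x) <= L * (t - s'')). { eapply Rle_trans. exact Hy. apply Rmult_le_compat_l; lra. }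
    specialize (HG Hyy).
    specialize (K1 s'' y ltac:(lra) ltac:(lra) ltac:(unfold Rminus; rewrite Rplus_opp_r, Rabs_R0; lra)).
    specialize (K2 s'' ltac:(lra)).
    apply Rabs_def2 in K1. apply Rabs_def2 in K2. unfold gap in *. lra. }
  assert (ClB2 : 0 < m -> forall y, Rabs (y - x) <= L * (t - m) -> Fv m y < phi m).
  { intros Hm y Hy. destruct (Rle_lt_or_eq_dec _ _ (ClB1 Hm y Hy)) as [|Heq]; auto. exfalso.
    assert (HmT : 0 <= m <= T) by lra.
    set (a := u m y). set (b := Kexp gamma (h m y)). set (c := v m y).
    assert (HGb := G_bounds a b c). fold a b c in Heq. unfold Fv in Heq. fold a b c in Heq.
    rewrite Heq in HGb. destruct HGb as [B1 [B2 [B3 Bcase]]].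
    set (H1 := h m y). assert (HH1 : 0 < H1) by (apply Hpos; auto).
    set (lam := Rpower H1 ((gamma+1)/2)).
    set (k := Rpower H1 ((gamma-3)/2)).
    assert (Hlam : lam <= L).
    { assert (b <= phi t).
      { pose proof (abs_b (a+b)). pose proof (abs_b (a-b)). pose proof (Hphimono m t Hmt). lra. }
      assert (H1 <= vartheta gamma (phi t)).
      { apply Kexp_le_vartheta; auto. left; auto. }
      unfold lam, L. apply Rle_Rpower_l. lra. lra. }
    assert (Hlam0 : 0 <= lam) by (unfold lam, Rpower; left; apply exp_pos).
    assert (Cone : forall cc, Rabs cc <= L -> forall e, 0 < e < m ->
               Fv (m - e) (y - cc * e) < phi (m - e)).
    { intros cc Hcc e He. apply (ClA (m - e) ltac:(lra) (m-e) ltac:(lra)).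
      replace (y - cc * e - x) with ((y - x) + - (cc * e)) by ring.
      eapply Rle_trans. apply Rabs_triang. rewrite Rabs_Ropp, Rabs_mult, (Rabs_right e) by lra.
      assert (Rabs cc * e <= L * e) by (apply Rmult_le_compat_r; lra). nra. }
    assert (Eht : ht m y = - (H1 ^ 2 * ux m y)) by (pose proof (P1 m y HmT); unfold H1; lra).
    assert (Eut : ut m y = c - Rpower H1 (gamma - 1) * hx m y).
    { pose proof (P2 m y HmT). rewrite (Derive_hgamma gamma T h ht hx m y Hg Ch Hpos HmT) in H.
      unfold c, H1. lra. }
    assert (Evt : vt m y = - a) by (pose proof (P3 m y HmT); unfold a; lra).
    assert (Id1 : k * H1 ^ 2 = lam) by (apply Rpower_id1; auto).
    assert (Id2 : k * lam = Rpower H1 (gamma - 1)) by apply Rpower_id2.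
    assert (Hp : phi m < (1 + eps) * phi m) by (pose proof (Hphipos m); nra).
    assert (PL : Lim0 (fun e => (phi m - phi (m - e)) / e) ((1 + eps) * phi m)).
    { unfold phi. apply phi_lim. }
    destruct Bcase as [C1 | [C2 | C3]].
    -
      assert (Lg : Lim0 (fun e => ((a - b) - (u (m-e) (y - (-lam)*e) - Kexp gamma (h (m-e) (y - (-lam)*e))))/e)
                   ((ut m y + (-lam) * ux m y) + (-1) * (k * (ht m y + (-lam) * hx m y)))).
      { pose proof (Lim0_plus _ _ _ _ (dir_lim T u ut ux m y (-lam) Cu ltac:(lra))
           (Lim0_scal (-1) _ _ (dirK_lim gamma T h ht hx m y (-lam) Hg Ch Hpos ltac:(lra)))) as HL2.
        refine (Lim0_ext _ _ _ 1 Rlt_0_1 _ HL2). intros e He; cbv beta; unfold a, b; field; lra. }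
      assert (Eg : (ut m y + (-lam) * ux m y) + (-1) * (k * (ht m y + (-lam) * hx m y)) = c).
      { rewrite Eht, Eut.
        replace ((-1) * (k * (- (H1 ^ 2 * ux m y) + - lam * hx m y))) with
          ((k * H1 ^ 2) * ux m y + (k * lam) * hx m y) by ring.
        rewrite Id1, Id2. ring. }
      rewrite Eg in Lg.
      destruct (touch (fun e => u (m-e) (y - (-lam)*e) - Kexp gamma (h (m-e) (y - (-lam)*e)))
                 (fun e => phi (m - e)) (a - b) (phi m) c ((1+eps) * phi m) m Hm) as [T1|T1];
        auto.
      + intros e He. pose proof (Cone (-lam) ltac:(rewrite Rabs_Ropp, Rabs_right; lra) e He).
        unfold Fv in H. destruct (G_bounds (u (m - e) (y - - lam * e)) (Kexp gamma (h (m - e) (y - - lam * e)))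
             (v (m - e) (y - - lam * e))) as [G1 _]. lra.
      + pose proof (abs_b c); lra.
      + pose proof (abs_b c); lra.
    -
      assert (Lg : Lim0 (fun e => ((a + b) - (u (m-e) (y - lam*e) + Kexp gamma (h (m-e) (y - lam*e))))/e)
                   ((ut m y + lam * ux m y) + (k * (ht m y + lam * hx m y)))).
      { pose proof (Lim0_plus _ _ _ _ (dir_lim T u ut ux m y lam Cu ltac:(lra))
           (dirK_lim gamma T h ht hx m y lam Hg Ch Hpos ltac:(lra))) as HL2.
        refine (Lim0_ext _ _ _ 1 Rlt_0_1 _ HL2). intros e He; cbv beta; unfold a, b; field; lra. }
      assert (Eg : (ut m y + lam * ux m y) + (k * (ht m y + lam * hx m y)) = c).
      { rewrite Eht, Eut.
        replace (k * (- (H1 ^ 2 * ux m y) + lam * hx m y)) with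
          (- (k * H1 ^ 2) * ux m y + (k * lam) * hx m y) by ring.
        rewrite Id1, Id2. ring. }
      rewrite Eg in Lg.
      destruct (touch (fun e => u (m-e) (y - lam*e) + Kexp gamma (h (m-e) (y - lam*e)))
                 (fun e => phi (m - e)) (a + b) (phi m) c ((1+eps) * phi m) m Hm) as [T1|T1];
        auto.
      + intros e He. pose proof (Cone lam ltac:(rewrite Rabs_right; lra) e He).
        unfold Fv in H. destruct (G_bounds (u (m - e) (y - lam * e)) (Kexp gamma (h (m - e) (y - lam * e)))
             (v (m - e) (y - lam * e))) as [_ [G1 _]]. lra.
      + pose proof (abs_b c); lra.
      + pose proof (abs_b c); lra.
    -
      assert (Lg : Lim0 (fun e => (c - v (m-e) (y - 0*e))/e) (vt m y + 0 * vx m y)).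
      { apply (dir_lim T v vt vx m y 0 Cv ltac:(lra)). }
      replace (vt m y + 0 * vx m y) with (-a) in Lg by (rewrite Evt; ring).
      destruct (touch (fun e => v (m-e) (y - 0*e))
                 (fun e => phi (m - e)) c (phi m) (-a) ((1+eps) * phi m) m Hm) as [T1|T1];
        auto.
      + intros e He. pose proof (Cone 0 ltac:(rewrite Rabs_R0; lra) e He).
        unfold Fv in H. destruct (G_bounds (u (m - e) (y - 0 * e)) (Kexp gamma (h (m - e) (y - 0 * e)))
             (v (m - e) (y - 0 * e))) as [_ [_ [G1 _]]]. lra.
      + pose proof (abs_b (a+b)). pose proof (abs_b (a-b)). lra.
      + pose proof (abs_b (a+b)). pose proof (abs_b (a-b)). lra. }
  assert (GoodM : Good m).
  { intros s' Hs' y Hy. destruct (Rle_lt_or_eq_dec _ _ (proj2 Hs')) as [Hlt|Heq].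
    - apply (ClA s' ltac:(lra) s' ltac:(lra) y Hy).
    - subst s'. destruct (Rle_lt_or_eq_dec _ _ Hm0) as [Hp|H0].
      + apply ClB2; auto.
      + rewrite <- H0 in *. apply (Good0 0 ltac:(lra) y Hy). }
  assert (Hmt' : m = t).
  { destruct (Rle_lt_or_eq_dec _ _ Hmt) as [Hlt|]; auto. exfalso.
    assert (Hex : exists sg, m < sg <= t /\ Good sg).
    { apply NNPP. intro Hn.
      set (sig := fun n : nat => m + (t - m) / (INR n + 1)).
      assert (Hsig : forall n, m < sig n <= t).
      { intros n. unfold sig. pose proof (pos_INR n). split.
        assert (0 < (t-m)/(INR n + 1)) by (apply Rdiv_lt_0_compat; lra). lra.
        assert ((t-m)/(INR n + 1) <= t - m).
        { unfold Rdiv. apply Rle_trans with ((t-m)*1). apply Rmult_le_compat_l. lra.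
          rewrite <- Rinv_1. apply Rinv_le_contravar; lra. lra. } lra. }
      assert (Hbad : forall n, exists p : R * R, 0 <= fst p <= sig n /\
                Rabs (snd p - x) <= L * (t - fst p) /\ phi (fst p) <= Fv (fst p) (snd p)).
      { intros n. apply NNPP. intro Hno. apply Hn. exists (sig n). split. apply Hsig.
        intros s' Hs' y Hy. destruct (Rlt_or_le (Fv s' y) (phi s')) as [|Hle]; auto.
        exfalso. apply Hno. exists (s', y). simpl. auto. }
      destruct (choice _ Hbad) as [f Hf].
      set (sn := fun n => fst (f n)). set (yn := fun n => snd (f n)).
      assert (Hsn : forall n, m < sn n <= sig n).
      { intros n. destruct (Hf n) as [A [B C]]. fold (sn n) (yn n) in A, B, C. split; [|lra].
        destruct (Rlt_or_le m (sn n)); auto. exfalso.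
        pose proof (GoodM (sn n) ltac:(lra) (yn n) B). lra. }
      assert (Hyn : forall n, Rabs (yn n - x) <= L * (t - m)).
      { intros n. destruct (Hf n) as [A [B C]]. fold (sn n) (yn n) in A, B, C.
        eapply Rle_trans. exact B. apply Rmult_le_compat_l. lra. pose proof (Hsn n). lra. }
      destruct (Bolzano_Weierstrass yn (fun z => x - L*(t-m) <= z <= x + L*(t-m)) (compact_P3 _ _)) as [l Hl].
      { intros n. pose proof (Hyn n). pose proof (abs_b (yn n - x)). lra. }
      assert (Hlx : Rabs (l - x) <= L * (t - m)).
      { destruct (Rle_or_lt (Rabs (l - x)) (L * (t - m))) as [|Hgt]; auto. exfalso.
        assert (Hg0 : 0 < Rabs (l - x) - L * (t - m)) by lra.
        destruct (Hl (fun z => Rabs (z - l) < Rabs (l - x) - L * (t - m)) 0%nat) as [p [_ Hp]].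
        { exists (mkposreal _ Hg0). intros z Hz. exact Hz. }
        pose proof (Hyn p). pose proof (Rabs_triang (l - yn p) (yn p - x)) as H0.
        replace (l - yn p + (yn p - x)) with (l - x) in H0 by ring.
        rewrite (Rabs_minus_sym l (yn p)) in H0. cbv beta in Hp. lra. }
      assert (HFl : Fv m l < phi m) by (apply (GoodM m ltac:(lra) l Hlx)).
      set (gap := phi m - Fv m l).
      destruct (Fv_cont m l ltac:(lra) (gap/2)) as [d1 [Hd1 K1]]. unfold gap; lra.
      destruct (phi_cont m (gap/2)) as [d2 [Hd2 K2]]. unfold gap; lra.
      set (dd := Rmin d1 d2). assert (Hdd : 0 < dd) by (apply Rmin_pos; auto).
      pose proof (Rmin_l d1 d2) as Hm1. pose proof (Rmin_r d1 d2) as Hm2. fold dd in Hm1, Hm2.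
      destruct (archimed_cor1 (dd / (t - m))) as [N [HN HN0]]. apply Rdiv_lt_0_compat; lra.
      destruct (Hl (fun z => Rabs (z - l) < dd) N) as [p [HpN Hp]].
      { exists (mkposreal _ Hdd). intros z Hz. exact Hz. }
      assert (Hsp : sn p - m < dd).
      { pose proof (Hsn p) as Hs1. unfold sig in Hs1.
        assert (HINR : 0 < INR N) by (apply lt_0_INR; exact HN0).
        assert (Q1 : INR N <= INR p + 1) by (pose proof (le_INR _ _ HpN); lra).
        assert (Q2 : / (INR p + 1) <= / INR N) by (apply Rinv_le_contravar; lra).
        assert (Q3 : (t - m) / (INR p + 1) <= (t-m) * / INR N) by (unfold Rdiv; apply Rmult_le_compat_l; lra).
        assert (Q4 : (t - m) * / INR N < (t - m) * (dd / (t - m))) by (apply Rmult_lt_compat_l; lra).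
        replace ((t - m) * (dd / (t - m))) with dd in Q4 by (field; lra). lra. }
      destruct (Hf p) as [A [B C]]. fold (sn p) (yn p) in A, B, C.
      pose proof (Hsn p). pose proof (Hsig p).
      specialize (K1 (sn p) (yn p) ltac:(lra) ltac:(rewrite Rabs_right; lra) ltac:(lra)).
      specialize (K2 (sn p) ltac:(rewrite Rabs_right; lra)).
      apply Rabs_def2 in K1. apply Rabs_def2 in K2. unfold gap in *. lra. }
    destruct Hex as [sg [Hsg Gsg]].
    assert (sg <= m) by (apply Hub; split; [lra|auto]). lra. }
  subst m. apply (GoodM t ltac:(lra) x). unfold Rminus. rewrite !Rplus_opp_r, Rabs_R0, Rmult_0_r. lra.
Qed.

Theorem lemma2p1
  (gamma T : R) (h u v ht hx ut ux vt vx : R -> R -> R) :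
  1 <= gamma -> 0 < T ->
  C1_strip T h ht hx -> C1_strip T u ut ux -> C1_strip T v vt vx ->
  (forall t x, 0 <= t <= T -> 0 < h t x) ->
  (* the system *)
  (forall t x, 0 <= t <= T -> ht t x + (h t x) ^ 2 * ux t x = 0) ->
  (forall t x, 0 <= t <= T ->
     ut t x + Derive (fun y => Rpower (h t y) gamma / gamma) x - v t x = 0) ->
  (forall t x, 0 <= t <= T -> vt t x + u t x = 0) ->
  (* Z_0^sharp finite and positive *)
  (exists z, supR (fun x => Rmax (Zj gamma 1 h hx ux 0 x) (Zj gamma 2 h hx ux 0 x))
               = Finite z /\ 0 < z) ->
  (* omega_0^sharp finite and positive *)
  (exists w, supR (fun x => / h 0 x + vx 0 x) = Finite w /\ 0 < w) ->
  (* inf h_0 finite and positive *)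
  (exists a, infR (fun x => h 0 x) = Finite a /\ 0 < a) ->
  (* sup {h_0, |u_0|, |v_0|} finite and positive *)
  (exists b, supR (fun x => Rmax (h 0 x) (Rmax (Rabs (u 0 x)) (Rabs (v 0 x))))
               = Finite b /\ 0 < b) ->
  forall M0 : R,
  supR (fun x => Rmax (Rabs (RI1 gamma h u 0 x))
                   (Rmax (Rabs (RI2 gamma h u 0 x)) (Rabs (RI3 v 0 x)))) = Finite M0 ->
  forall t, 0 <= t <= T ->
    Rbar_le (supR (fun x => Rmax (Rabs (RI1 gamma h u t x))
                   (Rmax (Rabs (RI2 gamma h u t x)) (Rabs (RI3 v t x)))))
            (Finite (M0 * exp t)) /\
    Rbar_le (supR (fun x => h t x)) (Finite (vartheta gamma (M0 * exp t))).
Proof.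
  intros Hg HT Ch Cu Cv Hpos P1 P2 P3 _ _ _ _ M0 HM0 t Ht.
  assert (Eq : forall s y, 0 <= s <= T ->
     Rmax (Rabs (RI1 gamma h u s y)) (Rmax (Rabs (RI2 gamma h u s y)) (Rabs (RI3 v s y)))
     = G (u s y) (Kexp gamma (h s y)) (v s y)).
  { intros s y Hs. unfold RI1, RI2, RI3, G. rewrite Kfun_eq; auto. }
  assert (Hinit : forall y, G (u 0 y) (Kexp gamma (h 0 y)) (v 0 y) <= M0).
  { intros y. rewrite <- Eq by lra.
    pose proof (Lub_Rbar_correct (fun z => exists x, z = Rmax (Rabs (RI1 gamma h u 0 x))
                   (Rmax (Rabs (RI2 gamma h u 0 x)) (Rabs (RI3 v 0 x))))) as [Hub _].
    unfold supR in HM0. rewrite HM0 in Hub. apply (Hub _ (ex_intro _ y eq_refl)). }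
  assert (HM0pos : 0 <= M0) by (eapply Rle_trans; [apply G_nonneg | apply (Hinit 0)]).
  assert (Hpt : forall x, G (u t x) (Kexp gamma (h t x)) (v t x) <= M0 * exp t).
  { intros x. destruct (Rle_or_lt (G (u t x) (Kexp gamma (h t x)) (v t x)) (M0 * exp t)) as [|Hgt]; auto.
    exfalso.
    set (gap := G (u t x) (Kexp gamma (h t x)) (v t x) - M0 * exp t).
    assert (Hc : continuity_pt (fun e => (M0 + e) * exp ((1 + e) * t)) 0).
    { apply derivable_continuous_pt. eexists. apply is_derive_Reals. auto_derive. auto. reflexivity. }
    destruct (cont_R _ _ Hc gap ltac:(unfold gap; lra)) as [d [Hd K]].
    specialize (K (d/2) ltac:(rewrite Rabs_right; lra)).
    replace ((M0 + 0) * exp ((1 + 0) * t)) with (M0 * exp t) in K by (f_equal; [ring | f_equal; ring]).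
    pose proof (core gamma T h u v ht hx ut ux vt vx M0 (d/2) t x Hg Ch Cu Cv Hpos P1 P2 P3 Hinit
                  ltac:(lra) Ht).
    apply Rabs_def2 in K. unfold gap in K. lra. }
  split.
  - unfold supR. pose proof (Lub_Rbar_correct (fun z => exists x, z = Rmax (Rabs (RI1 gamma h u t x))
                   (Rmax (Rabs (RI2 gamma h u t x)) (Rabs (RI3 v t x))))) as [_ Hl].
    apply Hl. intros z [x ->]. simpl. rewrite Eq by lra. apply Hpt.
  - unfold supR. pose proof (Lub_Rbar_correct (fun z => exists x, z = h t x)) as [_ Hl].
    apply Hl. intros z [x ->]. simpl. apply Kexp_le_vartheta; auto.
    apply Rmult_le_pos; auto. left; apply exp_pos.
    pose proof (Hpt x). pose proof (G_bounds (u t x) (Kexp gamma (h t x)) (v t x)) as [B1 [B2 _]].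
    pose proof (abs_b (u t x + Kexp gamma (h t x))). pose proof (abs_b (u t x - Kexp gamma (h t x))).
    lra.
Qed.
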